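(* Let $p=(p_k)_{k\in\mathbb{N}}$ be a probability mass function with $p_k=0$ for all odd $k$, and let $(G^{(p)}_n)_{n\ge n_p}$ be the disjoint unions of circulant regular graphs described below, with $\phi_n$ a uniformly chosen vertex of $G^{(p)}_n$ and $c\in(0,1)$. Then (a) $\lim_{n\to\infty}\mathbb{P}(d^{(G^{(p)}_n)}_{\phi_n}=k)=p_k$ for every $k$; (b) $R^{(G^{(p)}_n)}_v=1$ for every $n\ge n_p$ and every vertex $v$ of $G^{(p)}_n$.
   Context: For even $k\ge2$ and $N>k$, the circulant graph $G_{k,N}$ has vertex set $\mathbb{Z}/N\mathbb{Z}$, each vertex $i$ being adjacent to $i\pm1,\dots,i\pm k/2$; it is $k$-regular. Let $N_{k,n}=\lfloor np_k\rfloor$ and let $(M_n)$ be a sequence of integers diverging to infinity slowly enough that $N_{k,n}\ge k+1$ for all even $k\in[M_n]$ with $p_k>0$; let $n_p=\min\{n: M_n\ge2\}$. For $n\ge n_p$, $G^{(p)}_n$ is the disjoint union of the graphs $G_{k,N_{k,n}}$ over even $k\in[M_n]$ with $p_k>0$ (it has $n(1+o(1))$ vertices). PageRank with damping factor $c\in(0,1)$ on a finite graph without isolated vertices: $p_{ij}=a_{ij}/d_i$ and $\boldsymbol{R}$ is the unique solution of $\boldsymbol{R}=c\boldsymbol{R}\boldsymbol{P}+(1-c)\boldsymbol{1}$. *)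

(* Defs.v *)
From HB Require Import structures.
From mathcomp Require Import all_boot all_order all_algebra.
From mathcomp Require Import all_classical all_reals all_analysis.
Set Implicit Arguments. Unset Strict Implicit. Unset Printing Implicit Defensive.
Import Order.TTheory GRing.Theory Num.Theory.
Local Open Scope ring_scope.

(* N_{k,n} = floor (n p_k)  (for p_k >= 0, truncn = floor) *)
Definition Nkn (R : realType) (p : nat -> R) (n k : nat) : nat :=
  Num.truncn (n%:R * p k).

Definition circ_adj (k N a b : nat) : bool :=
  [exists j : 'I_(k./2).+1, (0 < (j : nat))%N &&
     ((b == (a + j) %% N)%N || (a == (b + j) %% N)%N)].

(* Candidate vertices of G_n^{(p)}: pairs (k, i) with k <= M_n and i < N_{k,n} *)
Definition Vtype (R : realType) (p : nat -> R) (M : nat -> nat) (n : nat) : finType :=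
  {k : 'I_(M n).+1 & 'I_(Nkn p n k)}.

Definition Vset (R : realType) (p : nat -> R) (M : nat -> nat) (n : nat)
  : {set Vtype p M n} :=
  [set v : Vtype p M n | [&& ~~ odd (tag v), (1 <= (tag v : nat))%N & 0 < p (tag v)]].

Definition adj (R : realType) (p : nat -> R) (M : nat -> nat) (n : nat)
  (u v : Vtype p M n) : bool :=
  [&& u \in Vset p M n, v \in Vset p M n, (tag u == tag v)
    & circ_adj (tag u) (Nkn p n (tag u)) (tagged u) (tagged v)].

Definition deg (R : realType) (p : nat -> R) (M : nat -> nat) (n : nat)
  (v : Vtype p M n) : nat :=
  #|[set u in Vset p M n | adj v u]|.

(* P(d_{phi_n} = k) for phi_n uniform on the vertex set *)
Definition prob_deg (R : realType) (p : nat -> R) (M : nat -> nat) (n k : nat) : R :=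
  (#|[set v in Vset p M n | deg v == k]|%:R) / (#|Vset p M n|%:R).

(* R is a PageRank vector (solution of R = c R P + (1-c) 1) with p_ij = a_ij / d_i *)
Definition isPageRank (R : realType) (p : nat -> R) (M : nat -> nat) (n : nat)
  (c : R) (Rk : Vtype p M n -> R) : Prop :=
  forall j, j \in Vset p M n ->
    Rk j = c * (\sum_(i in Vset p M n)
                  Rk i * ((adj i j : nat)%:R / (deg i)%:R)) + (1 - c).

(* Main.v *)
Require Import Defs.
From HB Require Import structures.
From mathcomp Require Import all_boot all_order all_algebra.
From mathcomp Require Import all_classical all_reals all_analysis.
From mathcomp Require Import zify ring lra.
Import Order.TTheory GRing.Theory Num.Theory.
Import numFieldNormedType.Exports.
Local Open Scope ring_scope.

Lemma mod2 (x N : nat) : (x < N + N)%N -> (x %% N = if x < N then x else x - N)%N.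
Proof.
case: ifP => h1 h2; first by rewrite modn_small.
have -> : x = (x - N + N)%N by lia.
rewrite modnDr modn_small; lia.
Qed.

Lemma circ_char h N a d : (a < N)%N -> (d < N)%N -> (h + h < N)%N ->
  circ_adj h.*2 N a ((a + d) %% N) = ((1 <= d <= h) || (N - h <= d))%N.
Proof.
move=> aN dN hN.
rewrite /circ_adj doubleK.
rewrite (@mod2 (a + d) N); last by lia.
apply/existsP/idP.
  case=> j /andP [j0 /orP [] /eqP].
    rewrite (@mod2 (a + j) N); last by have := ltn_ord j; lia.
    have := ltn_ord j; case: ifP; case: ifP; lia.
  set b := (if _ then _ else _).
  have bN : (b < N)%N by rewrite /b; case: ifP; lia.
  rewrite (@mod2 (b + j) N); last by have := ltn_ord j; lia.
  rewrite /b; have := ltn_ord j; case: ifP; case: ifP; lia.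
move=> /orP [] H.
  have jh : (d < h.+1)%N by lia.
  exists (Ordinal jh); rewrite /=; apply/andP; split; first by lia.
  apply/orP; left; apply/eqP.
  rewrite (@mod2 (a + d) N); last by lia. by [].
have jh : (N - d < h.+1)%N by lia.
exists (Ordinal jh); rewrite /=; apply/andP; split; first by lia.
apply/orP; right; apply/eqP.
set b := (if _ then _ else _).
have bN : (b < N)%N by rewrite /b; case: ifP; lia.
rewrite (@mod2 (b + (N - d)) N); last by lia.
rewrite /b; case: ifP; case: ifP; lia.
Qed.

Lemma count_arcs h N : (h + h < N)%N ->
  (\sum_(0 <= d < N) ((1 <= d <= h) || (N - h <= d))%N : nat)%N = h.*2.
Proof.
move=> hN.
rewrite big_ltn; last by lia.
rewrite (@big_cat_nat _ _ _ h.+1 1 N) /=; [|lia|lia].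
rewrite (@big_cat_nat _ _ _ (N - h) h.+1 N) /=; [|lia|lia].
rewrite (@eq_big_nat _ _ _ 1 h.+1 _ (fun=> 1%N)); last by move=> i Hi; lia.
rewrite (@eq_big_nat _ _ _ h.+1 (N - h) _ (fun=> 0%N)); last by move=> i Hi; lia.
rewrite (@eq_big_nat _ _ _ (N - h) N _ (fun=> 1%N)); last by move=> i Hi; lia.
rewrite !sum_nat_const_nat; lia.
Qed.

Lemma circ_count h N' (a : 'I_N'.+1) : (h + h < N'.+1)%N ->
  #|[set b : 'I_N'.+1 | circ_adj h.*2 N'.+1 a b]| = h.*2.
Proof.
move=> hN.
rewrite -sum1_card big_mkcond /=.
rewrite (reindex_inj (addrI a)) /=.
rewrite -[RHS](count_arcs _ _ hN) big_mkord.
apply: eq_bigr => d _.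
rewrite inE.
have -> : nat_of_ord (a + d)%R = ((a + d) %% N'.+1)%N by [].
by rewrite circ_char //; case: ifP.
Qed.

Lemma deg_tag (R : realType) (p : nat -> R) M n (v : Vtype p M n) :
  v \in Vset p M n -> (tag v < Nkn p n (tag v))%N -> deg v = tag v.
Proof.
case: v => k a /= vV kN.
have hk : [&& ~~ odd k, (1 <= k)%N & 0 < p k] by move: vV; rewrite inE.
have kodd : ~~ odd k by case/and3P: hk.
rewrite /deg.
pose f := fun b : 'I_(Nkn p n k) => (Tagged (fun k : 'I_(M n).+1 => 'I_(Nkn p n k)) b : Vtype p M n).
have finj : injective f by move=> x y E; exact: (eq_from_Tagged E).
have -> : [set u in Vset p M n | adj (Tagged (fun k : 'I_(M n).+1 => 'I_(Nkn p n k)) a) u] =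
   f @: [set b : 'I_(Nkn p n k) | circ_adj k (Nkn p n k) a b].
  apply/eqP; rewrite finset.eqEsubset; apply/andP; split; apply/fintype.subsetP.
    case=> k' b; rewrite !inE /adj /= => /andP [_ /and4P [_ _ /eqP kk' H]].
    subst k'.
    by apply: imset_f; rewrite inE.
  case=> k' b /imsetP [b' Hb' E].
  have kk' : k' = k by move: E => /(congr1 tag).
  subst k'.
  have bb' := eq_from_Tagged E; subst b'.
  rewrite !inE /adj /= hk eqxx /=.
  rewrite vV /= inE /= hk /=.
  by move: Hb'; rewrite inE.
rewrite card_imset //.
clear vV f finj hk.
move: (Nkn p n k) a kN => N a kN.
move: (nat_of_ord k) kodd kN => k0 kodd kN.
rewrite -(odd_double_half k0) (negbTE kodd) add0n in kN *.
case: N a kN => [[]//|N'] a kN.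
rewrite -addnn in kN.
by rewrite circ_count // -addnn.
Qed.

Lemma circ_sym k N a b : circ_adj k N a b = circ_adj k N b a.
Proof.
rewrite /circ_adj; apply/existsP/existsP => -[j Hj]; exists j;
  by rewrite orbC.
Qed.

Lemma adj_sym (R : realType) (p : nat -> R) M n (u v : Vtype p M n) :
  adj u v = adj v u.
Proof.
case: u => ku a; case: v => kv b.
rewrite /adj /=; case: (ku =P kv) => [E|NE]; last first.
  have NE' : (ku == kv) = false by apply/eqP.
  by rewrite eq_sym NE' /= !andbF.
subst kv; rewrite eqxx /= circ_sym andbC.
by case: (_ \in Vset _ _ _); case: (_ \in Vset _ _ _); case: circ_adj.
Qed.

Lemma partb (R : realType) (p : nat -> R) (M : nat -> nat) (c : R)
  (M_slow : forall n k : nat, ~~ odd k -> (1 <= k <= M n)%N -> 0 < p k ->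
              (k.+1 <= Nkn p n k)%N)
  (c_gt0 : 0 < c) (c_lt1 : c < 1) n (Rk : Vtype p M n -> R) :
  isPageRank c Rk -> forall v, v \in Vset p M n -> Rk v = 1.
Proof.
move=> hPR v vV.
set V := Vset p M n.
have Hdeg : forall u, u \in V -> deg u = tag u /\ (0 < tag u)%N.
  move=> u uV; have := uV; rewrite inE => /and3P [h1 h2 h3].
  split=> //; apply: deg_tag => //.
  apply: M_slow => //; rewrite h2 /=; by have := ltn_ord (tag u).
pose w (i j : Vtype p M n) : R := (adj i j : nat)%:R / (deg i)%:R.
have w_ge0 : forall i j, 0 <= w i j by move=> i j; rewrite /w divr_ge0.
have Hw : forall j, j \in V -> \sum_(i in V) w i j = 1.
  move=> j jV.
  rewrite (eq_bigr (fun i => (adj i j : nat)%:R / (deg j)%:R)); last first.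
    move=> i iV; rewrite /w.
    case Ha: (adj i j); last by rewrite /= !mul0r.
    move: Ha; rewrite /adj => /and4P [_ _ /eqP E _].
    by rewrite (proj1 (Hdeg i iV)) (proj1 (Hdeg j jV)) E.
  rewrite -mulr_suml -natr_sum.
  have -> : (\sum_(i in V) (adj i j : nat))%N = deg j.
    rewrite /deg -sum1_card big_mkcond [RHS]big_mkcond /=.
    apply: eq_bigr => i _; rewrite !inE adj_sym.
    by case: ([&& _, _ & _]); case: (adj j i).
  apply: divff; rewrite pnatr_eq0 -lt0n (proj1 (Hdeg j jV)).
  exact: (proj2 (Hdeg j jV)).
pose D (i : Vtype p M n) : R := Rk i - 1.
have HD : forall j, j \in V -> D j = c * \sum_(i in V) D i * w i j.
  move=> j jV; rewrite /D hPR //.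
  rewrite [X in _ = c * X](eq_bigr (fun i => Rk i * w i j - w i j)); last first.
    by move=> i _; rewrite mulrBl mul1r.
  rewrite sumrB Hw //.
  rewrite /w; lra.
have [j jV jmax] := arg_maxP (fun i => `|D i|) vV.
have Hj : `|D j| <= c * `|D j|.
  rewrite {1}HD // normrM.
  have c0 : 0 <= c by apply: ltW.
  rewrite (ger0_norm c0); apply: ler_wpM2l => //.
  apply: (le_trans (ler_norm_sum _ _ _)).
  rewrite -[X in _ <= X]mulr1 -(Hw j jV) mulr_sumr.
  apply: ler_sum => i iV; rewrite normrM (ger0_norm (w_ge0 i j)).
  by apply: ler_wpM2r => //; apply: jmax.
have : `|D j| <= 0 by nra.
have := jmax v vV; rewrite /D => H1 H2.
have : `|Rk v - 1| <= 0 by apply: le_trans H2.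
rewrite normr_le0 subr_eq0 => /eqP //.
Qed.

Local Open Scope classical_set_scope.
Local Open Scope ring_scope.

Definition condk {R : realType} (p : nat -> R) (k : nat) : bool :=
  [&& ~~ odd k, (1 <= k)%N & 0 < p k].

Lemma card_tagQ (R : realType) (p : nat -> R) M n (Q : pred 'I_(M n).+1) :
  #|[set v in Vset p M n | Q (tag v)]| =
  (\sum_(k' < (M n).+1 | condk p k' && Q k') Nkn p n k')%N.
Proof.
rewrite -sum1_card.
rewrite [RHS](eq_bigr (fun k' : 'I_(M n).+1 => \sum_(j : 'I_(Nkn p n k') | true) 1)%N); last first.
  by move=> k' _; rewrite sum1_card card_ord.
rewrite (sig_big_dep _ (fun _ _ => true) (fun _ _ => 1%N)) /=.
by apply: eq_bigl => v; rewrite !inE andbT.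
Qed.

Lemma psum_le1 (R : realType) (p : nat -> R)
  (p_ge0 : forall k, 0 <= p k)
  (p_sum : (fun m : nat => \sum_(k < m) p k) @ \oo --> (1 : R)) m :
  \sum_(k < m) p k <= 1.
Proof.
have nd : nondecreasing_seq (fun m : nat => \sum_(k < m) p k).
  apply/nondecreasing_seqP => i; rewrite big_ord_recr /=.
  by rewrite lerDl.
have := nondecreasing_cvgn_le nd (cvgP _ p_sum) m.
by rewrite (cvg_lim _ p_sum).
Qed.

Lemma cvg_trunc (R : realType) (q : R) : 0 <= q ->
  (fun n : nat => (Num.truncn (n%:R * q))%:R / n%:R) @ \oo --> q.
Proof.
move=> q0; apply/cvgrPdist_lt => e e0.
near=> n.
have n0 : (0 < n)%N by near: n; exact: nbhs_infty_gt.
have ne : e^-1 < n%:R.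
  near: n; have := nbhs_infty_ger (e^-1 + 1); apply: filterS => n H; lra.
have nR : 0 < n%:R :> R by rewrite ltr0n.
have [h1 h2] : ((Num.truncn (n%:R * q))%:R <= n%:R * q) /\ (n%:R * q < (Num.truncn (n%:R * q)).+1%:R).
  by apply/andP; apply: truncn_itv; rewrite mulr_ge0.
move: h1 h2; set t := (Num.truncn _)%:R; rewrite -addn1 natrD => h1 h2.
have -> : q - t / n%:R = (n%:R * q - t) / n%:R by field; lra.
rewrite ger0_norm; last by rewrite divr_ge0 //; lra.
rewrite ltr_pdivrMr //.
have : 1 < e * n%:R.
  have : e * e^-1 = 1 by rewrite divff //; lra.
  nra.
lra.
Unshelve. all: by end_near.
Qed.

Lemma cvg_S (R : realType) (p : nat -> R) (M : nat -> nat)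
  (p_ge0 : forall k, 0 <= p k)
  (p_sum : (fun m : nat => \sum_(k < m) p k) @ \oo --> (1 : R))
  (M_div : forall B : nat, exists n0 : nat, forall n, (n0 <= n)%N -> (B <= M n)%N) :
  (fun n : nat => (\sum_(k' < (M n).+1) Nkn p n k')%N%:R / n%:R) @ \oo --> (1 : R).
Proof.
apply/cvgrPdist_lt => e e0.
have e2 : 0 < e / 2 by lra.
have [K _ HK] := (cvgrPdist_lt _ _).1 p_sum (e/2) e2.
have {HK} HK := HK K (leqnn K).
move: HK => /= HK.
have [n1 Hn1] := M_div K.
near=> n.
have n0 : (0 < n)%N by near: n; exact: nbhs_infty_gt.
have nK : (K <= M n)%N by apply: Hn1; near: n; exact: nbhs_infty_ge.
have ne : K%:R * 2 / e < n%:R.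
  near: n; have := nbhs_infty_ger (K%:R * 2 / e + 1); apply: filterS => n H; lra.
rewrite ltr_pdivrMr // in ne.
have nR : 0 < n%:R :> R by rewrite ltr0n.
set S := (\sum_(k' < (M n).+1) Nkn p n k')%N.
have Sup : S%:R <= n%:R :> R.
  rewrite /S natr_sum.
  apply: (@le_trans _ _ (\sum_(k' < (M n).+1) n%:R * p k')).
    apply: ler_sum => i _; rewrite /Nkn truncn_le mulr_ge0 //.
  rewrite -mulr_sumr -[X in _ <= X]mulr1 ler_wpM2l //.
  exact: psum_le1.
have Slo : n%:R * (\sum_(k < K) p k) - K%:R <= S%:R.
  apply: (@le_trans _ _ (\sum_(k' < K) Nkn p n k')%N%:R); last first.
    rewrite ler_nat /S (big_ord_widen (M n).+1 (fun k' => Nkn p n k')); last by lia.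
    rewrite [X in (X <= _)%N]big_mkcond /=.
    by apply: leq_sum => i _; case: ifP.
  rewrite natr_sum mulr_sumr.
  have -> : K%:R = \sum_(k' < K) (1 : R) by rewrite sumr_const card_ord.
  rewrite -sumrB; apply: ler_sum => i _.
  have := truncnS_gt (n%:R * p i); rewrite /Nkn -addn1 natrD; lra.
have -> : 1 - S%:R / n%:R = (n%:R - S%:R) / n%:R :> R by field; lra.
rewrite ger0_norm; last by rewrite divr_ge0 //; lra.
rewrite ltr_pdivrMr //.
have h1 : 1 - \sum_(k < K) p k < e / 2 by have := HK; rewrite ltr_norml; lra.
have : n%:R * (1 - \sum_(k < K) p k) <= n%:R * (e / 2) by apply: ler_wpM2l; lra.
lra.
Unshelve. all: by end_near.
Qed.

Lemma deg_V (R : realType) (p : nat -> R) (M : nat -> nat)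
  (M_slow : forall n k : nat, ~~ odd k -> (1 <= k <= M n)%N -> 0 < p k ->
              (k.+1 <= Nkn p n k)%N) n (u : Vtype p M n) :
  u \in Vset p M n -> deg u = tag u.
Proof.
move=> uV; have := uV; rewrite inE => /and3P [h1 h2 h3].
apply: deg_tag => //.
apply: M_slow => //; rewrite h2 /=; by have := ltn_ord (tag u).
Qed.

Lemma parta (R : realType) (p : nat -> R) (M : nat -> nat)
  (p_ge0 : forall k, 0 <= p k)
  (p_sum : (fun m : nat => \sum_(k < m) p k) @ \oo --> (1 : R))
  (p0 : p 0%N = 0)
  (p_odd : forall k, odd k -> p k = 0)
  (M_div : forall B : nat, exists n0 : nat, forall n, (n0 <= n)%N -> (B <= M n)%N)
  (M_slow : forall n k : nat, ~~ odd k -> (1 <= k <= M n)%N -> 0 < p k ->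
              (k.+1 <= Nkn p n k)%N) (k : nat) :
  (fun n => prob_deg p M n k) @ \oo --> p k.
Proof.
have pk0 : forall k', ~~ condk p k' -> p k' = 0.
  move=> k'; rewrite /condk; case: (boolP (odd k')) => [/p_odd //|_] /=.
  case: k' => [_|k'] /=; first exact: p0.
  by move=> H; apply/eqP; rewrite eq_le p_ge0 andbT leNgt.
have numE : forall n, #|[set v in Vset p M n | deg v == k]| =
    (\sum_(k' < (M n).+1 | condk p k' && (k' == k :> nat)) Nkn p n k')%N.
  move=> n; rewrite -card_tagQ; apply: eq_card => v.
  rewrite [LHS]inE [RHS]inE.
  case: (boolP (v \in Vset p M n)) => vV //=.
  by rewrite (@deg_V _ _ _ M_slow _ _ vV).
have denE : forall n, #|Vset p M n| = (\sum_(k' < (M n).+1) Nkn p n k')%N.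
  move=> n.
  have -> : #|Vset p M n| = #|[set v in Vset p M n | xpredT (tag v)]|.
    by apply: eq_card => v; rewrite [in RHS]inE andbT.
  rewrite (card_tagQ _ _ _ _ xpredT) big_mkcond /=; apply: eq_bigr => k' _.
  rewrite andbT; case: (boolP (condk p k')) => // /pk0 H.
  by rewrite /Nkn H mulr0 truncn0.
case: (boolP (condk p k)) => ck; last first.
  have H := pk0 _ ck.
  rewrite H.
  have -> : (fun n => prob_deg p M n k) = fun _ => 0.
    apply: funext => n; rewrite /prob_deg numE big_pred0 ?mul0r //.
    move=> k'; apply/negP => /andP [ck' /eqP E].
    by move: ck; rewrite -E ck'.
  exact: cvg_cst.
have Hl : (fun n : nat => (Num.truncn (n%:R * p k))%:R / n%:R *
      ((\sum_(k' < (M n).+1) Nkn p n k')%N%:R / n%:R)^-1) @ \oo --> p k.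
  have := cvgM (cvg_trunc _ _ (p_ge0 k)) (cvgV (oner_neq0 R) (cvg_S _ _ _ p_ge0 p_sum M_div)).
  by rewrite invr1 mulr1; apply.
apply: cvg_trans Hl; apply: near_eq_cvg.
have [n1 Hn1] := M_div k.
near=> n.
have n0 : (0 < n)%N by near: n; exact: nbhs_infty_gt.
have nK : (k <= M n)%N by apply: Hn1; near: n; exact: nbhs_infty_ge.
have nR : n%:R != 0 :> R by rewrite pnatr_eq0 -lt0n.
rewrite /prob_deg numE denE.
have kM : (k < (M n).+1)%N by [].
have numk : (\sum_(k' < (M n).+1 | condk p k' && (k' == k :> nat)) Nkn p n k')%N = Nkn p n k.
  rewrite (big_pred1 (Ordinal kM)) //.
  move=> k'; rewrite /=.
  case: (boolP (k' == Ordinal kM)) => [/eqP -> | NE] /=; first by rewrite ck eqxx.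
  apply/negbTE; apply/negP => /andP [_ /eqP E]; move/negP: NE; apply.
  by apply/eqP; apply: val_inj.
rewrite numk.
rewrite /Nkn /=.
set a := (Num.Def.trunc _)%:R; set S := (\sum_(_ < _) _)%:R.
by rewrite invfM invrK [S^-1 * _]mulrC mulrA mulfVK.
Unshelve. all: by end_near.
Qed.

Theorem mainTheorem10 (R : realType) (p : nat -> R) (M : nat -> nat) (c : R)
  (p_ge0 : forall k, 0 <= p k)
  (p_sum : (fun m : nat => \sum_(k < m) p k) @ \oo --> (1 : R))
  (p0 : p 0%N = 0)
  (p_odd : forall k, odd k -> p k = 0)
  (M_div : forall B : nat, exists n0 : nat, forall n, (n0 <= n)%N -> (B <= M n)%N)
  (M_slow : forall n k : nat, ~~ odd k -> (1 <= k <= M n)%N -> 0 < p k ->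
              (k.+1 <= Nkn p n k)%N)
  (c_gt0 : 0 < c) (c_lt1 : c < 1) :
  (forall k : nat, (fun n => prob_deg p M n k) @ \oo --> p k) /\
  (forall n : nat, (2 <= M n)%N ->
     forall Rk : Vtype p M n -> R, isPageRank c Rk ->
     forall v, v \in Vset p M n -> Rk v = 1).
Proof.
split.
  move=> k; exact: (@parta R p M p_ge0 p_sum p0 p_odd M_div M_slow k).
move=> n _ Rk hPR v vV.
exact: (@partb R p M c M_slow c_gt0 c_lt1 n Rk hPR v vV).
Qed.
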